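(* The lifts $\Delta_C$ of the strongly connected components $C$ of $G$ are Morse sets for the flow $\psi$ on $\Delta$; that is, the collection $\{\Delta_C : C \text{ a strongly connected component of } G\}$ consists of non-void, pairwise disjoint, invariant, isolated, compact sets and there are no cycles between them (so that it is a Morse decomposition of $(\Delta,\psi)$).
   Context: $G$ is a finite directed graph (loops allowed) with vertex set $V$. $\Omega$ is the set of bi-infinite paths in $G$, i.e. sequences $(x_i)_{i\in\mathbb Z}\in V^{\mathbb Z}$ such that for every $i$ there is an edge from $x_i$ to $x_{i+1}$. Fix $h>0$. $\bar\Delta$ is the set of functions $x:\mathbb R\to V$ that are constant on each interval $[nh,(n+1)h)$, $n\in\mathbb Z$, and satisfy $(x(ih))_{i\in\mathbb Z}\in\Omega$. $\Delta=\{x(\cdot+t): x\in\bar\Delta,\ t\in\mathbb R\}$, with metric $d(x,y)=\sum_{i\in\mathbb Z}4^{-|i|}\frac1h\int_{ih}^{(i+1)h}\delta(x,y,t)\,dt$, where $\delta(x,y,t)=1$ if $x(t)\ne y(t)$ and $0$ otherwise. The flow $\psi:\mathbb R\times\Delta\to\Delta$ is $\psi(t,x)=x(\cdot+t)$. A strongly connected component of $G$ is a maximal nonempty set $C\subseteq V$ such that for all $u,v\in C$ (including $u=v$) there is a directed path of positive length from $u$ to $v$ with all vertices in $C$. The lift of $C$ is $\Delta_C=\{f\in\Delta: f(t)\in C \text{ for all } t\in\mathbb R\}$. For $x\in\Delta$, $\omega(x)$ (resp. $\alpha(x)$) is the set of limits of $\psi(t_k,x)$ along sequences $t_k\to+\infty$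 (resp. $t_k\to-\infty$). A set $K$ is invariant if $\psi(t,K)\subseteq K$ for all $t\in\mathbb R$; isolated if there is a neighborhood $N$ of $K$ with $K\subset\operatorname{int}N$ such that $\psi(t,x)\in N$ for all $t\in\mathbb R$ implies $x\in K$. A Morse decomposition is a finite collection $\{\mathcal M_1,\dots,\mathcal M_n\}$ of non-void, pairwise disjoint, invariant, isolated, compact sets such that (1) $\omega(x),\alpha(x)\subseteq\bigcup_i\mathcal M_i$ for every $x$, and (2) (no cycles) if there are Morse sets $\mathcal M_{j_0},\dots,\mathcal M_{j_l}$ and points $x_1,\dots,x_l\notin\bigcup_i\mathcal M_i$ with $\alpha(x_m)\subseteq\mathcal M_{j_{m-1}}$ and $\omega(x_m)\subseteq\mathcal M_{j_m}$ for $m=1,\dots,l$, then $\mathcal M_{j_0}\ne\mathcal M_{j_l}$. *)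

(* Defs.v *)
From mathcomp Require Import all_boot.
From Stdlib Require Import Reals ClassicalEpsilon.
Set Implicit Arguments. Unset Strict Implicit. Unset Printing Implicit Defensive.

Open Scope R_scope.

Section Defs.
Variables (V : finType) (E : rel V) (h : R).

Definition InOmega (x : Z -> V) : Prop := forall i : Z, E (x i) (x (i + 1)%Z).

Definition InDeltaBar (x : R -> V) : Prop :=
  (forall (n : Z) (s : R), IZR n * h <= s < (IZR n + 1) * h -> x s = x (IZR n * h)) /\
  InOmega (fun i : Z => x (IZR i * h)).

Definition InDelta (x : R -> V) : Prop :=
  exists (xb : R -> V) (t : R), InDeltaBar xb /\ x = (fun s => xb (s + t)).

Definition psi (t : R) (x : R -> V) : R -> V := fun s => x (s + t).

(** Riemann integral of f over [a,b] (0 if not integrable; the value does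
    not depend on the integrability proof, RiemannInt_P5). *)
Definition Rint (f : R -> R) (a b : R) : R :=
  epsilon (inhabits 0) (fun l => exists pr : Riemann_integrable f a b, RiemannInt pr = l).

Definition delta (x y : R -> V) (t : R) : R := if x t == y t then 0 else 1.

Definition dterm (x y : R -> V) (i : Z) : R :=
  / h * Rint (delta x y) (IZR i * h) ((IZR i + 1) * h).

(** Terms of the sum over Z grouped as i = 0 and i = +-(k+1). *)
Definition dseries (x y : R -> V) (n : nat) : R :=
  match n with
  | O => dterm x y 0
  | S k => (/ 4) ^ n * (dterm x y (Z.of_nat n) + dterm x y (- Z.of_nat n))
  end.

(** d(x,y) = sum_{i in Z} 4^{-|i|} (1/h) int_{ih}^{(i+1)h} delta(x,y,t) dt. *)
Definition d (x y : R -> V) : R :=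
  epsilon (inhabits 0) (fun l => infinite_sum (dseries x y) l).

Definition omega_lim (x : R -> V) : (R -> V) -> Prop := fun y =>
  InDelta y /\ exists tk : nat -> R, cv_infty tk /\ Un_cv (fun k => d (psi (tk k) x) y) 0.

Definition alpha_lim (x : R -> V) : (R -> V) -> Prop := fun y =>
  InDelta y /\ exists tk : nat -> R, cv_infty (fun k => - tk k) /\
    Un_cv (fun k => d (psi (tk k) x) y) 0.

Definition open_in_Delta (U : (R -> V) -> Prop) : Prop :=
  forall f, U f -> InDelta f /\
    exists eps, 0 < eps /\ forall g, InDelta g -> d f g < eps -> U g.

Definition compact_in_Delta (K : (R -> V) -> Prop) : Prop :=
  (forall f, K f -> InDelta f) /\
  forall (I : Type) (U : I -> (R -> V) -> Prop),
    (forall i, open_in_Delta (U i)) ->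
    (forall f, K f -> exists i, U i f) ->
    exists l : list I, forall f, K f -> exists i, List.In i l /\ U i f.

Definition invariant (K : (R -> V) -> Prop) : Prop :=
  forall t f, K f -> K (psi t f).

Definition isolated (K : (R -> V) -> Prop) : Prop :=
  exists N : (R -> V) -> Prop,
    (forall f, N f -> InDelta f) /\
    (forall f, K f -> exists eps, 0 < eps /\
        forall g, InDelta g -> d f g < eps -> N g) /\
    (forall x, InDelta x -> (forall t, N (psi t x)) -> K x).

Definition MorseDecomposition (I : finType) (P : I -> Prop)
    (M : I -> (R -> V) -> Prop) : Prop :=
  (forall i, P i -> exists f, M i f) /\
  (forall i j, P i -> P j -> ~ (forall f, M i f <-> M j f) ->
      forall f, ~ (M i f /\ M j f)) /\
  (forall i, P i -> invariant (M i)) /\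
  (forall i, P i -> isolated (M i)) /\
  (forall i, P i -> compact_in_Delta (M i)) /\
  (forall x, InDelta x ->
      (forall y, omega_lim x y -> exists i, P i /\ M i y) /\
      (forall y, alpha_lim x y -> exists i, P i /\ M i y)) /\
  (forall (l : nat) (j : nat -> I) (x : nat -> R -> V),
      (1 <= l)%nat ->
      (forall m, (m <= l)%nat -> P (j m)) ->
      (forall m, (1 <= m)%nat -> (m <= l)%nat ->
          InDelta (x m) /\
          (forall i, P i -> ~ M i (x m)) /\
          (forall y, alpha_lim (x m) y -> M (j (m - 1)%nat) y) /\
          (forall y, omega_lim (x m) y -> M (j m) y)) ->
      ~ (forall f, M (j 0%nat) f <-> M (j l) f)).

Definition strongly_conn (C : {set V}) : Prop :=
  forall u v, u \in C -> v \in C ->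
    exists (n : nat) (p : nat -> V),
      (0 < n)%nat /\ p 0%nat = u /\ p n = v /\
      (forall k, (k < n)%nat -> E (p k) (p k.+1)) /\
      (forall k, (k <= n)%nat -> p k \in C).

Definition is_scc (C : {set V}) : Prop :=
  C != set0 /\ strongly_conn C /\
  (forall D : {set V}, C \subset D -> D != set0 -> strongly_conn D -> D = C).

Definition liftC (C : {set V}) : (R -> V) -> Prop :=
  fun f => InDelta f /\ forall t : R, f t \in C.

End Defs.

(* Main.v *)
Require Import Defs.
From mathcomp Require Import all_boot.
From Stdlib Require Import Reals Lra Lia ZArith ClassicalEpsilon Classical FunctionalExtensionality.
From Coquelicot Require Import Coquelicot.
From mathcomp Require Import zify.
Open Scope R_scope.


Definition fl (r : R) : Z := Int_part r.

Lemma fl_spec r : IZR (fl r) <= r < IZR (fl r) + 1.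
Proof. unfold fl. destruct (base_Int_part r). lra. Qed.

Lemma fl_unique n r : IZR n <= r < IZR n + 1 -> fl r = n.
Proof.
  intros [H1 H2]. destruct (fl_spec r) as [H3 H4].
  assert (A : (fl r < n + 1)%Z). { apply lt_IZR. rewrite plus_IZR. lra. }
  assert (B : (n < fl r + 1)%Z). { apply lt_IZR. rewrite plus_IZR. lra. }
  lia.
Qed.

Lemma fl_addZ r (m : Z) : fl (r + IZR m) = (fl r + m)%Z.
Proof. apply fl_unique. rewrite plus_IZR. destruct (fl_spec r). lra. Qed.

Lemma fl_IZR (m : Z) : fl (IZR m) = m.
Proof. apply fl_unique. lra. Qed.

Lemma Rint_RInt (f : R -> R) (a b : R) : ex_RInt f a b -> Rint f a b = RInt f a b.
Proof.
  intros H. unfold Rint.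
  assert (Hex : exists l, exists pr : Riemann_integrable f a b, RiemannInt pr = l).
  { exists (RiemannInt (ex_RInt_Reals_0 f a b H)). eexists; reflexivity. }
  destruct (epsilon_spec (inhabits 0) _ Hex) as [pr <-].
  symmetry. apply RInt_Reals.
Qed.

Lemma ex_RInt_piece (F : R -> R) (a b c : R) : a <= b -> (forall x, a < x < b -> F x = c) -> ex_RInt F a b.
Proof.
  intros Hab H. apply (ex_RInt_ext (fun _ => c)); [|apply ex_RInt_const].
  intros x. rewrite Rmin_left // Rmax_right // => Hx. symmetry; auto.
Qed.

Lemma RInt_piece (F : R -> R) (a b c : R) : a <= b -> (forall x, a < x < b -> F x = c) -> RInt F a b = (b - a) * c.
Proof.
  intros Hab H. rewrite (RInt_ext F (fun _ => c)).
  - rewrite RInt_const. reflexivity.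
  - intros x. rewrite Rmin_left // Rmax_right //. auto.
Qed.

Lemma ex_RInt_2piece (F : R -> R) (a p b c1 c2 : R) : a <= p <= b ->
  (forall x, a < x < p -> F x = c1) -> (forall x, p < x < b -> F x = c2) -> ex_RInt F a b.
Proof.
  intros [H1 H2] Ha Hb. apply (ex_RInt_Chasles F a p b).
  - apply (ex_RInt_piece F a p c1); auto.
  - apply (ex_RInt_piece F p b c2); auto.
Qed.

Lemma RInt_bounds (F : R -> R) (a b : R) : a <= b -> ex_RInt F a b ->
  (forall x, a < x < b -> 0 <= F x <= 1) -> 0 <= RInt F a b <= b - a.
Proof.
  intros Hab Hex H. split.
  - replace 0 with (RInt (fun _ => 0) a b).
    + apply RInt_le; auto. apply ex_RInt_const. intros x Hx; apply H; auto.
    + rewrite RInt_const. rewrite /scal /= /mult /=. ring.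
  - replace (b - a) with (RInt (fun _ => 1) a b).
    + apply RInt_le; auto. apply ex_RInt_const. intros x Hx; apply H; auto.
    + rewrite RInt_const. rewrite /scal /= /mult /=. ring.
Qed.

Lemma RInt_split3 (F : R -> R) (a c e b : R) : a <= c -> c <= e -> e <= b -> ex_RInt F a b ->
  RInt F a b = RInt F a c + RInt F c e + RInt F e b.
Proof.
  intros H1 H2 H3 Hex.
  have Hac : ex_RInt F a c by apply (ex_RInt_Chasles_1 F a c b); [lra|auto].
  have Hcb : ex_RInt F c b by apply (ex_RInt_Chasles_2 F a c b); [lra|auto].
  have Hce : ex_RInt F c e by apply (ex_RInt_Chasles_1 F c e b); [lra|auto].
  have Heb : ex_RInt F e b by apply (ex_RInt_Chasles_2 F c e b); [lra|auto].
  rewrite -(RInt_Chasles F a c b) // -(RInt_Chasles F c e b) //.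
  rewrite /plus /=. ring.
Qed.

Lemma RInt_ub (F : R -> R) (a c e b : R) : a <= c -> c <= e -> e <= b -> ex_RInt F a b ->
  (forall x, a < x < b -> F x <= 1) ->
  (forall x, a < x < c -> F x = 0) -> (forall x, e < x < b -> F x = 0) ->
  RInt F a b <= e - c.
Proof.
  intros H1 H2 H3 Hex Hle Z1 Z2. rewrite (RInt_split3 F a c e b) //.
  rewrite (RInt_piece F a c 0) // (RInt_piece F e b 0) //.
  have Hce : ex_RInt F c e.
  { apply (ex_RInt_Chasles_1 F c e b). lra. apply (ex_RInt_Chasles_2 F a c b); auto. lra. }
  have : RInt F c e <= RInt (fun _ => 1) c e.
  { apply RInt_le; auto. apply ex_RInt_const. intros x Hx; apply Hle; lra. }
  rewrite RInt_const /scal /= /mult /=. lra.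
Qed.

Lemma RInt_lb (F : R -> R) (a c e b : R) : a <= c -> c <= e -> e <= b -> ex_RInt F a b ->
  (forall x, a < x < b -> 0 <= F x) ->
  (forall x, c < x < e -> F x = 1) ->
  e - c <= RInt F a b.
Proof.
  intros H1 H2 H3 Hex Hge O1. rewrite (RInt_split3 F a c e b) //.
  rewrite (RInt_piece F c e 1) //.
  have Hac : ex_RInt F a c by apply (ex_RInt_Chasles_1 F a c b); [lra|auto].
  have Heb : ex_RInt F e b.
  { apply (ex_RInt_Chasles_2 F c e b). lra. apply (ex_RInt_Chasles_2 F a c b); auto. lra. }
  have : RInt (fun _ => 0) a c <= RInt F a c.
  { apply RInt_le; auto. apply ex_RInt_const. intros x Hx; apply Hge; lra. }
  have : RInt (fun _ => 0) e b <= RInt F e b.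
  { apply RInt_le; auto. apply ex_RInt_const. intros x Hx; apply Hge; lra. }
  rewrite !RInt_const /scal /= /mult /=. lra.
Qed.

Section Main.
Context {V : finType} (E : rel V) (h : R).
Hypothesis hpos : 0 < h.

Definition mk (a : Z -> V) (t : R) : R -> V := fun s => a (fl ((s + t) / h)).

Lemma mk_val a t s n : IZR n * h <= s + t < (IZR n + 1) * h -> mk a t s = a n.
Proof.
  intros H. unfold mk. f_equal. apply fl_unique.
  split.
  - apply (Rmult_le_reg_r h); auto. unfold Rdiv. rewrite Rmult_assoc Rinv_l; lra.
  - apply (Rmult_lt_reg_r h); auto. unfold Rdiv. rewrite Rmult_assoc Rinv_l; lra.
Qed.

Lemma fl_mul_spec r : IZR (fl (r / h)) * h <= r < (IZR (fl (r / h)) + 1) * h.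
Proof.
  destruct (fl_spec (r / h)) as [H1 H2]. split.
  - apply (Rmult_le_reg_r (/ h)). apply Rinv_0_lt_compat; auto.
    rewrite Rmult_assoc Rinv_r; lra.
  - apply (Rmult_lt_reg_r (/ h)). apply Rinv_0_lt_compat; auto.
    rewrite Rmult_assoc Rinv_r; lra.
Qed.

Lemma psi_mk a t tau : psi tau (mk a t) = mk a (t + tau).
Proof. apply functional_extensionality => s. unfold psi, mk. f_equal. f_equal. f_equal. ring. Qed.

Definition shiftZ (a : Z -> V) (m : Z) : Z -> V := fun z => a (z + m)%Z.

Lemma mk_shift a t (m : Z) : mk a (t + IZR m * h) = mk (shiftZ a m) t.
Proof.
  apply functional_extensionality => s. unfold mk, shiftZ. f_equal.
  rewrite -fl_addZ. f_equal. field. lra.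
Qed.

Lemma InDelta_mk a t : InOmega E a -> InDelta E h (mk a t).
Proof.
  intros Ha. exists (mk a 0), t. split; [split|].
  - intros n s Hs. rewrite (mk_val a 0 s n); [|lra].
    rewrite (mk_val a 0 (IZR n * h) n); auto. nra.
  - intros i. rewrite (mk_val a 0 (IZR i * h) i); [|nra].
    rewrite (mk_val a 0 (IZR (i+1) * h) (i+1)); [apply Ha|].
    rewrite plus_IZR. nra.
  - apply functional_extensionality => s. unfold mk. f_equal. f_equal. f_equal. ring.
Qed.

Lemma InDelta_inv f : InDelta E h f ->
  exists a t, InOmega E a /\ 0 <= t < h /\ f = mk a t.
Proof.
  intros [xb [t [[Hst Hom] ->]]].
  set a := fun z : Z => xb (IZR z * h).
  assert (Hx : forall s, xb s = mk a 0 s).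
  { intros s. destruct (fl_mul_spec s) as [H1 H2].
    rewrite (Hst (fl (s / h)) s); [|lra]. unfold mk, a. rewrite Rplus_0_r. reflexivity. }
  set m := fl (t / h). set th := t - IZR m * h.
  destruct (fl_mul_spec t) as [H1 H2].
  exists (shiftZ a m), th. split; [|split].
  - intros i. unfold shiftZ. replace (i + 1 + m)%Z with ((i + m) + 1)%Z by lia. apply Hom.
  - unfold th, m. lra.
  - rewrite -mk_shift. apply functional_extensionality => s. rewrite Hx.
    unfold mk. f_equal. f_equal. f_equal. unfold th. ring.
Qed.

Lemma pieces a t w : exists p c1 c2, w < p <= w + h /\
  (forall s, w < s < p -> mk a t s = c1) /\ (forall s, p <= s < w + h -> mk a t s = c2).
Proof.
  destruct (fl_mul_spec (w + t)) as [H1 H2].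
  set n0 := fl ((w + t) / h) in H1 H2.
  exists ((IZR n0 + 1) * h - t), (a n0), (a (n0 + 1)%Z). split; [lra|split].
  - intros s Hs. apply mk_val. lra.
  - intros s Hs. apply mk_val. rewrite plus_IZR. lra.
Qed.

Lemma delta_const (f g : R -> V) (P : R -> Prop) u v :
  (forall s, P s -> f s = u) -> (forall s, P s -> g s = v) ->
  forall s, P s -> delta f g s = (if u == v then 0 else 1).
Proof. intros Hf Hg s Hs. unfold delta. rewrite Hf // Hg //. Qed.

Lemma delta_01 (f g : R -> V) s : 0 <= delta f g s <= 1.
Proof. unfold delta. case: (_ == _); lra. Qed.

Lemma ex_delta a t b t' w : ex_RInt (delta (mk a t) (mk b t')) w (w + h).
Proof.
  destruct (pieces a t w) as [p1 [c1 [c2 [Hp1 [Ha1 Ha2]]]]].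
  destruct (pieces b t' w) as [p2 [e1 [e2 [Hp2 [Hb1 Hb2]]]]].
  set F := delta (mk a t) (mk b t').
  destruct (Rle_dec p1 p2) as [Hle|Hle].
  - apply (ex_RInt_Chasles F w p2 (w + h)).
    + apply (ex_RInt_2piece F w p1 p2 (if c1 == e1 then 0 else 1) (if c2 == e1 then 0 else 1)).
      * lra.
      * apply (@delta_const _ _ (fun s => w < s < p1)); auto. intros s Hs; apply Hb1; lra.
      * apply (@delta_const _ _ (fun s => p1 < s < p2)); auto. intros s Hs; apply Ha2; lra.
        intros s Hs; apply Hb1; lra.
    + apply (ex_RInt_piece F p2 (w + h) (if c2 == e2 then 0 else 1)). lra.
      apply (@delta_const _ _ (fun s => p2 < s < w + h)). intros s Hs; apply Ha2; lra.
      intros s Hs; apply Hb2; lra.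
  - apply (ex_RInt_Chasles F w p1 (w + h)).
    + apply (ex_RInt_2piece F w p2 p1 (if c1 == e1 then 0 else 1) (if c1 == e2 then 0 else 1)).
      * lra.
      * apply (@delta_const _ _ (fun s => w < s < p2)). intros s Hs; apply Ha1; lra. auto.
      * apply (@delta_const _ _ (fun s => p2 < s < p1)). intros s Hs; apply Ha1; lra.
        intros s Hs; apply Hb2; lra.
    + apply (ex_RInt_piece F p1 (w + h) (if c2 == e2 then 0 else 1)). lra.
      apply (@delta_const _ _ (fun s => p1 < s < w + h)). intros s Hs; apply Ha2; lra.
      intros s Hs; apply Hb2; lra.
Qed.

Lemma dterm_eq (f g : R -> V) i : dterm h f g i = / h * Rint (delta f g) (IZR i * h) (IZR i * h + h).
Proof. unfold dterm. do 2 f_equal. ring. Qed.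

Lemma dterm_bounds a t b t' i : 0 <= dterm h (mk a t) (mk b t') i <= 1.
Proof.
  rewrite dterm_eq Rint_RInt; [|apply ex_delta].
  have := RInt_bounds (delta (mk a t) (mk b t')) (IZR i * h) (IZR i * h + h).
  move=> /(_ ltac:(lra) (ex_delta _ _ _ _ _) (fun x _ => delta_01 _ _ x)) [H1 H2].
  have Hh : 0 < / h by apply Rinv_0_lt_compat.
  split. nra. replace 1 with (/ h * h) by (field; lra). nra.
Qed.

Lemma dterm_ub a t b t' i c e :
  IZR i * h <= c -> c <= e -> e <= IZR i * h + h ->
  (forall x, IZR i * h < x < c -> mk a t x = mk b t' x) ->
  (forall x, e < x < IZR i * h + h -> mk a t x = mk b t' x) ->
  dterm h (mk a t) (mk b t') i <= (e - c) / h.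
Proof.
  intros H1 H2 H3 Z1 Z2.
  rewrite dterm_eq Rint_RInt; [|apply ex_delta].
  have := RInt_ub (delta (mk a t) (mk b t')) (IZR i * h) c e (IZR i * h + h) H1 H2 H3 (ex_delta _ _ _ _ _).
  move=> /(_ (fun x _ => proj2 (delta_01 _ _ x))) H.
  have {}H : RInt (delta (mk a t) (mk b t')) (IZR i * h) (IZR i * h + h) <= e - c.
  { apply H. intros x Hx. unfold delta. rewrite Z1 // eqxx //.
    intros x Hx. unfold delta. rewrite Z2 // eqxx //. }
  have Hh : 0 < / h by apply Rinv_0_lt_compat.
  unfold Rdiv. rewrite (Rmult_comm (e - c)). nra.
Qed.

Lemma dterm_lb a t b t' i c e :
  IZR i * h <= c -> c <= e -> e <= IZR i * h + h ->
  (forall x, c < x < e -> mk a t x <> mk b t' x) ->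
  (e - c) / h <= dterm h (mk a t) (mk b t') i.
Proof.
  intros H1 H2 H3 O1.
  rewrite dterm_eq Rint_RInt; [|apply ex_delta].
  have := RInt_lb (delta (mk a t) (mk b t')) (IZR i * h) c e (IZR i * h + h) H1 H2 H3 (ex_delta _ _ _ _ _).
  move=> /(_ (fun x _ => proj1 (delta_01 _ _ x))) H.
  have {}H : e - c <= RInt (delta (mk a t) (mk b t')) (IZR i * h) (IZR i * h + h).
  { apply H. intros x Hx. unfold delta. case: eqP => // Hq. exfalso; apply (O1 x Hx Hq). }
  have Hh : 0 < / h by apply Rinv_0_lt_compat.
  unfold Rdiv. rewrite (Rmult_comm (e - c)). nra.
Qed.

End Main.

Lemma pow_half_le n N : (N <= n)%nat -> (/ 2) ^ n <= (/ 2) ^ N.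
Proof.
  intros H. replace n with (N + (n - N))%nat by lia. rewrite pow_add.
  have H1 : 0 <= (/ 2) ^ N by apply pow_le; lra.
  have H2 : (/ 2) ^ (n - N) <= 1.
  { rewrite -(pow1 (n - N)). apply pow_incr. lra. }
  nra.
Qed.

Lemma pow_quarter n : (/ 4) ^ n = (/ 2) ^ n * (/ 2) ^ n.
Proof. rewrite -Rpow_mult_distr. f_equal. field. Qed.

Lemma pow_half_le1 n : 0 <= (/ 2) ^ n <= 1.
Proof. split. apply pow_le; lra. rewrite -(pow1 n). apply pow_incr. lra. Qed.

Lemma infsum_le (a : nat -> R) l B : infinite_sum a l -> (forall N, sum_f_R0 a N <= B) -> l <= B.
Proof.
  intros Hl HB. apply Rnot_lt_le => Hlt.
  destruct (Hl (l - B)) as [N HN]; [lra|].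
  have := HN N (le_n N). unfold R_dist. have := HB N. intros. 
  destruct (Rabs_def2 _ _ H0). lra.
Qed.

Lemma sum_geom_half K N : 0 <= K -> sum_f_R0 (fun n => K * (/ 2) ^ n) N <= 2 * K.
Proof.
  intros HK.
  have E1 : sum_f_R0 (fun n => K * (/ 2) ^ n) N = K * sum_f_R0 (fun n => (/ 2) ^ n) N.
  { elim: N => [|N IH] /=. ring. rewrite IH. ring. }
  have E2 := GP_finite (/ 2) N.
  have E3 : 0 <= (/ 2) ^ (Nat.add N 1) by apply pow_le; lra.
  have E4 : sum_f_R0 (fun n => (/ 2) ^ n) N <= 2.
  { set S := sum_f_R0 (fun n => (/ 2) ^ n) N in E2 *. 
    have HS : S = -2 * (S * (/ 2 - 1)) by field.
    rewrite E2 in HS. lra. }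
  rewrite E1 (Rmult_comm 2 K). apply Rmult_le_compat_l; auto.
Qed.

Lemma sum_ge_term (a : nat -> R) n : (forall k, 0 <= a k) -> a n <= sum_f_R0 a n.
Proof.
  intros Ha. destruct n as [|n] => /=. lra.
  have : 0 <= sum_f_R0 a n.
  { elim: n => [|n IH] /=. apply Ha. have := Ha n.+1. lra. }
  lra.
Qed.

Lemma key_ineq q x y eps p : 0 <= q <= 1 -> 0 <= x <= 1 -> 0 <= y <= 1 -> x <= eps -> y <= eps ->
  0 <= p <= 1 -> q * q * (x + y) <= (2 * eps + 2 * p) * q.
Proof.
  intros Hq Hx Hy Hxe Hye Hp.
  have A1 : q * q * (x + y) <= q * q * (2 * eps).
  { apply Rmult_le_compat_l. nra. lra. }
  have A2 : q * q * (2 * eps) <= q * (2 * eps).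
  { have : 0 <= q * (2 * eps) by nra.
    intros. rewrite (Rmult_assoc q q).
    have := Rmult_le_compat_r (q * (2 * eps)) q 1 ltac:(auto) ltac:(lra). lra. }
  nra.
Qed.

Lemma dseries_S {V : finType} h (f g : R -> V) n :
  dseries h f g n.+1 = (/ 4) ^ n.+1 * (dterm h f g (Z.of_nat n.+1) + dterm h f g (- Z.of_nat n.+1)).
Proof. reflexivity. Qed.

Section Main2.
Context {V : finType} {h : R}.
Hypothesis hpos : 0 < h.

Lemma dseries_bounds (a : Z -> V) (t : R) (b : Z -> V) (t' : R) n :
  0 <= dseries h (mk h a t) (mk h b t') n <= 2 * (/ 4) ^ n.
Proof.
  destruct n as [|n]; [unfold dseries|rewrite dseries_S].
  - have := dterm_bounds _ hpos a t b t' 0. simpl. lra.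
  - have := dterm_bounds _ hpos a t b t' (Z.of_nat n.+1).
    have := dterm_bounds _ hpos a t b t' (- Z.of_nat n.+1).
    have : 0 <= (/ 4) ^ n.+1 by apply pow_le; lra.
    nra.
Qed.

Lemma d_sum (a : Z -> V) (t : R) (b : Z -> V) (t' : R) : infinite_sum (dseries h (mk h a t) (mk h b t')) (d h (mk h a t) (mk h b t')).
Proof.
  unfold d. apply epsilon_spec.
  have Hg : is_series (fun n => 2 * (/ 4) ^ n) (2 * / (1 - / 4)).
  { apply (is_series_scal_l 2 (fun n => (/ 4) ^ n)). apply is_series_geom.
    rewrite Rabs_pos_eq; lra. }
  apply is_series_Reals in Hg.
  destruct (Rseries_CV_comp (dseries h (mk h a t) (mk h b t')) (fun n => 2 * (/ 4) ^ n))
    as [l Hl].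
  - intros n; apply dseries_bounds.
  - exists (2 * / (1 - / 4)). exact Hg.
  - exists l. exact Hl.
Qed.

Lemma d_ge_term (a : Z -> V) (t : R) (b : Z -> V) (t' : R) (i : Z) :
  (/ 4) ^ (Z.abs_nat i) * dterm h (mk h a t) (mk h b t') i <= d h (mk h a t) (mk h b t').
Proof.
  have Hs := d_sum a t b t'.
  have Hn : forall k, 0 <= dseries h (mk h a t) (mk h b t') k by intros k; apply dseries_bounds.
  apply Rle_trans with (dseries h (mk h a t) (mk h b t') (Z.abs_nat i)).
  - have := dterm_bounds _ hpos a t b t' i.
    destruct (Z.abs_nat i) as [|n] eqn:Ei.
    + have -> : i = 0%Z by lia. simpl. lra.
    + have Hp : 0 <= (/ 4) ^ n.+1 by apply pow_le; lra.
      have := dterm_bounds _ hpos a t b t' (Z.of_nat n.+1).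
      have := dterm_bounds _ hpos a t b t' (- Z.of_nat n.+1).
      unfold dseries.
      destruct (Z_lt_le_dec i 0).
      * have -> : i = (- Z.of_nat n.+1)%Z by lia. nra.
      * have -> : i = (Z.of_nat n.+1)%Z by lia. nra.
  - apply Rle_trans with (sum_f_R0 (dseries h (mk h a t) (mk h b t')) (Z.abs_nat i)).
    apply sum_ge_term; auto.
    apply sum_incr; auto.
Qed.

Lemma d_ub (a : Z -> V) (t : R) (b : Z -> V) (t' : R) (N : nat) eps : 0 <= eps ->
  (forall i : Z, (Z.abs_nat i <= N)%nat -> dterm h (mk h a t) (mk h b t') i <= eps) ->
  d h (mk h a t) (mk h b t') <= 4 * eps + 4 * (/ 2) ^ N.
Proof.
  intros He Hi.
  set K := 2 * eps + 2 * (/ 2) ^ N.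
  have HK : 0 <= K by have := pow_half_le1 N; unfold K; lra.
  apply (infsum_le _ _ _ (d_sum a t b t')) => M.
  apply Rle_trans with (sum_f_R0 (fun n => K * (/ 2) ^ n) M); last first.
  { have := sum_geom_half K M HK. unfold K. lra. }
  apply sum_growing => n.
  have := pow_half_le1 n. have := pow_half_le1 N.
  destruct (le_lt_dec n N) as [Hn|Hn].
  - destruct n as [|n]; [unfold dseries|rewrite dseries_S].
    + have := Hi 0%Z ltac:(simpl; lia). unfold K. simpl. intros P0 P1 P2. nra.
    + have H1 := Hi (Z.of_nat n.+1) ltac:(lia). have H2 := Hi (- Z.of_nat n.+1)%Z ltac:(lia).
      have H3 := pow_quarter n.+1.
      have H4 := dterm_bounds _ hpos a t b t' (Z.of_nat n.+1).
      have H5 := dterm_bounds _ hpos a t b t' (- Z.of_nat n.+1).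
      have H6 := pow_half_le1 n.+1.
      intros P1 P2. rewrite H3. unfold K.
      exact (key_ineq _ _ _ eps ((/ 2) ^ N) H6 H4 H5 H1 H2 P1).
  - have := dseries_bounds a t b t' n. have := pow_quarter n.
    have := pow_half_le n N ltac:(lia). intros P0 P1 P2 P3 P4. unfold K. nra.
Qed.

End Main2.

Lemma pow_dec (x : R) m n : 0 <= x <= 1 -> (m <= n)%nat -> x ^ n <= x ^ m.
Proof.
  intros Hx H. replace n with (m + (n - m))%nat by lia. rewrite pow_add.
  have H1 : 0 <= x ^ m by apply pow_le; lra.
  have H2 : x ^ (n - m) <= 1.
  { rewrite -(pow1 (n - m)). apply pow_incr. lra. }
  nra.
Qed.

Lemma le_div (x y h : R) : 0 < h -> y * h <= x -> y <= x / h.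
Proof.
  intros Hh H. apply (Rmult_le_reg_r h); auto. unfold Rdiv. rewrite Rmult_assoc Rinv_l; lra.
Qed.

Section Main3.
Context {V : finType} {h : R}.
Hypothesis hpos : 0 < h.

Definition agree (N : nat) (a b : Z -> V) : Prop :=
  forall z : Z, (- Z.of_nat N <= z <= Z.of_nat N + 1)%Z -> a z = b z.

Lemma window_agree (a b : Z -> V) t t' i :
  0 <= t <= h -> 0 <= t' <= h -> a i = b i -> a (i + 1)%Z = b (i + 1)%Z ->
  dterm h (mk h a t) (mk h b t') i <= Rabs (t - t') / h.
Proof.
  intros Ht Ht' E0 E1.
  have Hlo : Rmin t t' <= Rmax t t' by apply Rle_trans with t; [apply Rmin_l|apply Rmax_l].
  have Hab : Rabs (t - t') = Rmax t t' - Rmin t t'.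
  { unfold Rmax, Rmin. destruct (Rle_dec t t'). rewrite Rabs_left1; lra. rewrite Rabs_pos_eq; lra. }
  have L1 := Rmin_l t t'. have L2 := Rmin_r t t'. have M1 := Rmax_l t t'. have M2 := Rmax_r t t'.
  have Hmin : 0 <= Rmin t t' by apply Rmin_glb; lra.
  have Hmax : Rmax t t' <= h by apply Rmax_lub; lra.
  rewrite Hab.
  replace (Rmax t t' - Rmin t t') with (((IZR i + 1) * h - Rmin t t') - ((IZR i + 1) * h - Rmax t t')) by ring.
  apply dterm_ub; auto; try lra.
  - intros x Hx. rewrite (mk_val _ hpos a t x i); [|lra]. rewrite (mk_val _ hpos b t' x i); [|lra]. auto.
  - intros x Hx. rewrite (mk_val _ hpos a t x (i + 1)); [|rewrite plus_IZR; lra].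
    rewrite (mk_val _ hpos b t' x (i + 1)); [|rewrite plus_IZR; lra]. auto.
Qed.

Lemma dist_close (a b : Z -> V) t t' (N : nat) del :
  0 <= t <= h -> 0 <= t' <= h -> agree N a b -> Rabs (t - t') <= del ->
  d h (mk h a t) (mk h b t') <= 4 * (del / h) + 4 * (/ 2) ^ N.
Proof.
  intros Ht Ht' Hag Hd.
  have Hh : 0 < / h by apply Rinv_0_lt_compat.
  apply d_ub; auto.
  - have := Rabs_pos (t - t'). unfold Rdiv. nra.
  - intros i Hi. apply Rle_trans with (Rabs (t - t') / h).
    + apply window_agree; auto; apply Hag; lia.
    + unfold Rdiv. apply Rmult_le_compat_r; lra.
Qed.

Lemma dist_lb_step (a b : Z -> V) t t' p v :
  (forall s, p < s < p + h -> mk h b t' s = v) ->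
  (forall s, p < s < p + h -> mk h a t s <> v) ->
  (/ 4) ^ (Z.abs_nat (fl (p / h))).+1 / 2 <= d h (mk h a t) (mk h b t').
Proof.
  intros Hy Hg.
  destruct (fl_mul_spec _ hpos p) as [P1 P2].
  set i := fl (p / h) in P1 P2 *.
  have Hne : forall s, p < s < p + h -> mk h a t s <> mk h b t' s.
  { intros s Hs. rewrite Hy //. auto. }
  have Hq : forall m, 0 <= (/ 4) ^ m by intros m; apply pow_le; lra.
  destruct (Rle_dec (h / 2) ((IZR i + 1) * h - p)) as [C|C].
  - have L := dterm_lb _ hpos a t b t' i p ((IZR i + 1) * h) ltac:(lra) ltac:(lra) ltac:(lra)
      ltac:(intros x Hx; apply Hne; lra).
    have L2 : 1 / 2 <= ((IZR i + 1) * h - p) / h.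
    { apply le_div; auto. lra. }
    have G := d_ge_term hpos a t b t' i.
    have D := pow_dec (/ 4) (Z.abs_nat i) (Z.abs_nat i).+1 ltac:(lra) ltac:(lia).
    have := Hq (Z.abs_nat i). have := Hq (Z.abs_nat i).+1. intros. nra.
  - have L := dterm_lb _ hpos a t b t' (i + 1) ((IZR i + 1) * h) (p + h)
      ltac:(rewrite plus_IZR; lra) ltac:(lra) ltac:(rewrite plus_IZR; lra)
      ltac:(intros x Hx; apply Hne; lra).
    have L2 : 1 / 2 <= (p + h - (IZR i + 1) * h) / h.
    { apply le_div; auto. lra. }
    have G := d_ge_term hpos a t b t' (i + 1).
    have D := pow_dec (/ 4) (Z.abs_nat (i + 1)) (Z.abs_nat i).+1 ltac:(lra) ltac:(lia).
    have := Hq (Z.abs_nat (i + 1)). have := Hq (Z.abs_nat i).+1. intros. nra.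
Qed.

End Main3.

Definition b2 (P : Prop) : bool := if excluded_middle_informative P then true else false.
Lemma b2P (P : Prop) : b2 P = true <-> P.
Proof. unfold b2. destruct (excluded_middle_informative P); split; auto; discriminate. Qed.

Section Graph.
Context {V : finType} (E : rel V).
Local Set Implicit Arguments.
Local Unset Strict Implicit.

Definition epath (n : nat) (p : nat -> V) := forall k, (k < n)%nat -> E (p k) (p k.+1).
Definition reach (u v : V) := exists n p, p 0%nat = u /\ p n = v /\ epath n p.
Definition preach (u v : V) := exists n p, (0 < n)%nat /\ p 0%nat = u /\ p n = v /\ epath n p.

Lemma reach_refl u : reach u u.
Proof. exists 0%nat, (fun _ => u). repeat split. intros k Hk. done. Qed.

Definition pcat (n1 : nat) (p1 p2 : nat -> V) : nat -> V :=
  fun k => if (k <= n1)%nat then p1 k else p2 (k - n1)%nat.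

Lemma pcat_path n1 n2 p1 p2 : p1 n1 = p2 0%nat -> epath n1 p1 -> epath n2 p2 ->
  epath (n1 + n2) (pcat n1 p1 p2).
Proof.
  intros Hj H1 H2 k Hk. unfold pcat.
  case: (leqP k.+1 n1) => Hk1.
  - have -> : (k <= n1)%nat by lia. apply H1. lia.
  - case: (leqP k n1) => Hk2.
    + have Hk3 : k = n1 by lia. subst k. rewrite Hj. have -> : (n1.+1 - n1 = 1)%nat by lia.
      apply H2. lia.
    + have -> : (k.+1 - n1 = (k - n1).+1)%nat by lia. apply H2. lia.
Qed.

Lemma pcat_0 n1 p1 p2 : pcat n1 p1 p2 0%nat = p1 0%nat.
Proof. unfold pcat. done. Qed.

Lemma pcat_end n1 n2 p1 p2 : p1 n1 = p2 0%nat -> pcat n1 p1 p2 (n1 + n2) = p2 n2.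
Proof.
  intros Hj. unfold pcat. case: (leqP (n1 + n2) n1) => H.
  - have -> : n2 = 0%nat by lia. rewrite addn0. done.
  - f_equal. lia.
Qed.

Lemma reach_trans u v w : reach u v -> reach v w -> reach u w.
Proof.
  intros [n1 [p1 [A1 [B1 C1]]]] [n2 [p2 [A2 [B2 C2]]]].
  exists (n1 + n2)%nat, (pcat n1 p1 p2). split; [|split].
  - rewrite pcat_0. done.
  - rewrite pcat_end. done. congruence.
  - apply pcat_path; auto. congruence.
Qed.

Lemma preach_reach u v : preach u v -> reach u v.
Proof. intros [n [p [_ H]]]. exists n, p. exact H. Qed.

Lemma preach_trans_l u v w : preach u v -> reach v w -> preach u w.
Proof.
  intros [n1 [p1 [P1 [A1 [B1 C1]]]]] [n2 [p2 [A2 [B2 C2]]]].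
  exists (n1 + n2)%nat, (pcat n1 p1 p2). split; [lia|split; [|split]].
  - rewrite pcat_0. done.
  - rewrite pcat_end. done. congruence.
  - apply pcat_path; auto. congruence.
Qed.

Lemma reach_trans_preach u v w : reach u v -> preach v w -> preach u w.
Proof.
  intros [n1 [p1 [A1 [B1 C1]]]] [n2 [p2 [P2 [A2 [B2 C2]]]]].
  exists (n1 + n2)%nat, (pcat n1 p1 p2). split; [lia|split; [|split]].
  - rewrite pcat_0. done.
  - rewrite pcat_end. done. congruence.
  - apply pcat_path; auto. congruence.
Qed.

Lemma path_prefix n p k : epath n p -> (k <= n)%nat -> reach (p 0%nat) (p k).
Proof. intros H Hk. exists k, p. repeat split. intros j Hj. apply H. lia. Qed.

Lemma path_suffix n p k : epath n p -> (k <= n)%nat -> reach (p k) (p n).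
Proof.
  intros H Hk. exists (n - k)%nat, (fun j => p (k + j)%nat). split; [|split].
  - rewrite addn0. done.
  - f_equal. lia.
  - intros j Hj. have -> : (k + j.+1 = (k + j).+1)%nat by lia. apply H. lia.
Qed.

Definition cls (u : V) : {set V} := [set z | b2 (reach u z /\ reach z u)].

Lemma in_cls u z : z \in cls u <-> reach u z /\ reach z u.
Proof. rewrite inE. apply b2P. Qed.

Lemma cls_strongly u : preach u u -> strongly_conn E (cls u).
Proof.
  intros Hc x y Hx Hy. apply in_cls in Hx. apply in_cls in Hy.
  destruct Hx as [Hux Hxu]. destruct Hy as [Huy Hyu].
  have Hp : preach x y := reach_trans_preach Hxu (preach_trans_l Hc Huy).
  destruct Hp as [n [p [Pn [A [B C]]]]].
  exists n, p. repeat split; auto.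
  intros k Hk. apply in_cls. split.
  - apply reach_trans with x; auto. rewrite -A. apply (path_prefix C Hk).
  - apply reach_trans with y; auto. rewrite -B. apply (path_suffix C Hk).
Qed.


Lemma cls_self u : u \in cls u.
Proof. apply in_cls. split; apply reach_refl. Qed.

Lemma strongly_reach (C : {set V}) u v : strongly_conn E C -> u \in C -> v \in C -> preach u v.
Proof.
  intros H Hu Hv. destruct (H u v Hu Hv) as [n [p [Pn [A [B [Cc _]]]]]].
  exists n, p. auto.
Qed.

Lemma cls_scc u : preach u u -> is_scc E (cls u).
Proof.
  intros Hc. split; [|split].
  - apply/set0Pn. exists u. apply cls_self.
  - apply cls_strongly; auto.
  - intros D Hsub Hne Hs. apply/setP => z. apply/idP/idP => Hz; last by apply (subsetP Hsub).
    have Hu : u \in D by apply (subsetP Hsub); apply cls_self.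
    apply in_cls. split; apply preach_reach; apply (strongly_reach Hs); auto.
Qed.

Lemma scc_cls (C : {set V}) u : is_scc E C -> u \in C -> C = cls u.
Proof.
  intros [Hne [Hs Hmax]] Hu.
  have Hc : preach u u by apply (strongly_reach Hs).
  symmetry. apply Hmax.
  - apply/subsetP => z Hz. apply in_cls. split; apply preach_reach; apply (strongly_reach Hs); auto.
  - apply/set0Pn. exists u. apply cls_self.
  - apply cls_strongly; auto.
Qed.

Lemma scc_eq (C D : {set V}) u : is_scc E C -> is_scc E D -> u \in C -> u \in D -> C = D.
Proof. intros HC HD Hu Hu'. rewrite (scc_cls HC Hu) (scc_cls HD Hu'). done. Qed.

Lemma scc_mem (C : {set V}) u w : is_scc E C -> u \in C -> reach u w -> reach w u -> w \in C.
Proof. intros HC Hu H1 H2. rewrite (scc_cls HC Hu). apply in_cls. auto. Qed.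

Lemma scc_reach (C : {set V}) u v : is_scc E C -> u \in C -> v \in C -> reach u v.
Proof. intros [_ [Hs _]] Hu Hv. apply preach_reach. apply (strongly_reach Hs); auto. Qed.

Lemma segment (a : Z -> V) z1 z2 : InOmega E a -> (z1 <= z2)%Z -> reach (a z1) (a z2).
Proof.
  intros Ha Hz. exists (Z.to_nat (z2 - z1)), (fun k => a (z1 + Z.of_nat k)%Z). split; [|split].
  - f_equal. lia.
  - f_equal. lia.
  - intros k Hk. have -> : (z1 + Z.of_nat k.+1 = (z1 + Z.of_nat k) + 1)%Z by lia. apply Ha.
Qed.

Lemma segment_pos (a : Z -> V) z1 z2 : InOmega E a -> (z1 < z2)%Z -> preach (a z1) (a z2).
Proof.
  intros Ha Hz. exists (Z.to_nat (z2 - z1)), (fun k => a (z1 + Z.of_nat k)%Z). split; [lia|split; [|split]].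
  - f_equal. lia.
  - f_equal. lia.
  - intros k Hk. have -> : (z1 + Z.of_nat k.+1 = (z1 + Z.of_nat k) + 1)%Z by lia. apply Ha.
Qed.

End Graph.

Section Fut.
Context {V : finType} (E : rel V).
Local Set Implicit Arguments.
Local Unset Strict Implicit.

Definition Fut (sg : Z) (a : Z -> V) (v : V) := forall M : Z, exists z, (M <= sg * z)%Z /\ a z = v.

Lemma fut_aux sg a (L : seq V) : exists Z0, forall v, v \in L -> ~ Fut sg a v ->
  forall z, (Z0 <= sg * z)%Z -> a z <> v.
Proof.
  elim: L => [|x L [Z0 IH]].
  - exists 0%Z. intros v Hv. done.
  - destruct (classic (Fut sg a x)) as [Hx|Hx].
    + exists Z0. intros v. rewrite in_cons => /orP [/eqP ->|Hv] Hn; [done|]. apply IH; auto.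
    + have [M HM] : exists M, forall z, (M <= sg * z)%Z -> a z <> x.
      { apply NNPP => Hc. apply Hx => M. apply NNPP => Hc2. apply Hc. exists M.
        intros z Hz Haz. apply Hc2. exists z. auto. }
      exists (Z.max Z0 M). intros v. rewrite in_cons => /orP [/eqP ->|Hv] Hn z Hz.
      * apply HM. lia.
      * apply IH; auto. lia.
Qed.

Lemma fut_eventual sg a : exists Z0, forall z, (Z0 <= sg * z)%Z -> Fut sg a (a z).
Proof.
  destruct (fut_aux sg a (enum V)) as [Z0 H]. exists Z0. intros z Hz.
  apply NNPP => Hn. have Hm : a z \in enum V by rewrite mem_enum.
  exact (H (a z) Hm Hn z Hz erefl).
Qed.

Lemma sg_cases sg : (sg = 1 \/ sg = -1)%Z -> (sg * sg = 1)%Z.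
Proof. intros [->| ->]; reflexivity. Qed.

Lemma fut_nonempty sg a : (sg = 1 \/ sg = -1)%Z -> exists v, Fut sg a v.
Proof.
  intros Hs. destruct (fut_eventual sg a) as [Z0 H]. exists (a (sg * Z0)%Z). apply H.
  rewrite Z.mul_assoc sg_cases //. lia.
Qed.

Lemma fut_after a v z0 : Fut 1 a v -> exists z, (z0 < z)%Z /\ a z = v.
Proof. intros H. destruct (H (z0 + 1)%Z) as [z [Hz Ha]]. exists z. split; auto. lia. Qed.

Lemma fut_before a v z0 : Fut (-1) a v -> exists z, (z < z0)%Z /\ a z = v.
Proof. intros H. destruct (H (- z0 + 1)%Z) as [z [Hz Ha]]. exists z. split; auto. lia. Qed.

Lemma fut_ordered sg a u v : (sg = 1 \/ sg = -1)%Z -> Fut sg a u -> Fut sg a v ->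
  exists z1 z2, (z1 < z2)%Z /\ a z1 = u /\ a z2 = v.
Proof.
  intros [->| ->] Hu Hv.
  - destruct (fut_after 0 Hu) as [z1 [_ H1]]. destruct (fut_after z1 Hv) as [z2 [H2 H3]].
    exists z1, z2. auto.
  - destruct (fut_before 0 Hv) as [z2 [_ H2]]. destruct (fut_before z2 Hu) as [z1 [H1 H3]].
    exists z1, z2. auto.
Qed.

Lemma fut_cls sg a u v : InOmega E a -> (sg = 1 \/ sg = -1)%Z -> Fut sg a u -> Fut sg a v ->
  v \in cls E u /\ preach E u u.
Proof.
  intros Ha Hs Hu Hv. split.
  - apply in_cls. split.
    + destruct (fut_ordered Hs Hu Hv) as [z1 [z2 [H [<- <-]]]]. apply segment; auto. lia.
    + destruct (fut_ordered Hs Hv Hu) as [z1 [z2 [H [<- <-]]]]. apply segment; auto. lia.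
  - destruct (fut_ordered Hs Hu Hu) as [z1 [z2 [H [H1 H2]]]].
    have := segment_pos Ha H. rewrite H1 H2. done.
Qed.

End Fut.

Lemma abs_bounds x : - Rabs x <= x <= Rabs x.
Proof. split_Rabs; lra. Qed.

Section Lim.
Context {V : finType} (E : rel V) (h : R).
Hypothesis hpos : 0 < h.

Lemma lim_values sg (a : Z -> V) t y (tk : nat -> R) : (sg = 1 \/ sg = -1)%Z ->
  InDelta E h y -> cv_infty (fun k => IZR sg * tk k) ->
  Un_cv (fun k => d h (psi (tk k) (mk h a t)) y) 0 -> forall s, Fut sg a (y s).
Proof.
  intros Hsg Hy Hcv Hd s.
  destruct (InDelta_inv E h hpos y Hy) as [b [t' [Hb [Ht' ->]]]].
  apply NNPP => Hn.
  set v := mk h b t' s in Hn.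
  destruct (fut_eventual sg a) as [Z0 HZ0].
  destruct (fl_mul_spec h hpos (s + t')) as [S1 S2].
  set n := fl ((s + t') / h) in S1 S2.
  set p := IZR n * h - t'.
  have Hv : mk h b t' s = b n by apply mk_val; auto; lra.
  have Hyc : forall s', p < s' < p + h -> mk h b t' s' = v.
  { intros s' Hs'. unfold v. rewrite Hv. apply mk_val; auto. unfold p in Hs'. lra. }
  set c := (/ 4) ^ (Z.abs_nat (fl (p / h))).+1 / 2.
  have Hc : 0 < c by unfold c; have := pow_lt (/ 4) (Z.abs_nat (fl (p / h))).+1 ltac:(lra); lra.
  destruct (Hd c Hc) as [K1 HK1].
  set B := Rabs (IZR Z0 * h) + Rabs p + Rabs t + h.
  destruct (Hcv B) as [K2 HK2].
  set k := Nat.max K1 K2.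
  have Hk1 := HK1 k ltac:(lia). have Hk2 := HK2 k ltac:(lia).
  rewrite psi_mk in Hk1.
  have Hg : forall s', p < s' < p + h -> mk h a (t + tk k) s' <> v.
  { intros s' Hs' Heq.
    destruct (fl_mul_spec h hpos (s' + (t + tk k))) as [F1 F2].
    set z := fl ((s' + (t + tk k)) / h) in F1 F2.
    have Hz : (Z0 <= sg * z)%Z.
    { have B1 := abs_bounds (IZR Z0 * h). have B2 := abs_bounds p.
      have B3 := abs_bounds t.
      destruct Hsg as [-> | ->].
      - rewrite Rmult_1_l in Hk2.
        have : IZR Z0 * h < (IZR z + 1) * h by unfold B in Hk2; lra.
        move/(Rmult_lt_reg_r h _ _ hpos). rewrite -plus_IZR. move/lt_IZR. lia.
      - have : IZR z * h < - IZR Z0 * h.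
        { have : - tk k > B by lra. unfold B. lra. }
        rewrite -opp_IZR. move/(Rmult_lt_reg_r h _ _ hpos). move/lt_IZR. lia. }
    apply Hn. have := HZ0 z Hz. unfold mk in Heq. rewrite Heq. done. }
  have := dist_lb_step hpos a b (t + tk k) t' p v Hyc Hg.
  unfold R_dist in Hk1. rewrite Rminus_0_r in Hk1.
  have := Rle_abs (d h (mk h a (t + tk k)) (mk h b t')). fold c. lra.
Qed.

End Lim.

Lemma dep_choice {S : Type} (P : nat -> S -> Prop) (Rl : nat -> S -> S -> Prop) (s0 : S) :
  P 0%nat s0 -> (forall n s, P n s -> exists s', P n.+1 s' /\ Rl n s s') ->
  exists f : nat -> S, f 0%nat = s0 /\ forall n, P n (f n) /\ Rl n (f n) (f n.+1).
Proof.
  intros H0 Hs.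
  pose step n s := epsilon (inhabits s0) (fun s' => P n.+1 s' /\ Rl n s s').
  pose f := fix f n := match n with O => s0 | S m => step m (f m) end.
  have Hf : forall n, P n (f n).
  { elim => [|n IH] //=. exact (proj1 (epsilon_spec (inhabits s0) _ (Hs n (f n) IH))). }
  exists f. split; auto. intros n. split; auto.
  exact (proj2 (epsilon_spec (inhabits s0) _ (Hs n (f n) (Hf n)))).
Qed.

Lemma inf_pigeon {T : eqType} (P : nat -> Prop) (Rl : T -> nat -> Prop) (L : seq T) :
  (forall M, exists k, (M <= k)%nat /\ P k) ->
  (forall k, P k -> exists u, u \in L /\ Rl u k) ->
  exists u, u \in L /\ forall M, exists k, (M <= k)%nat /\ Rl u k.
Proof.
  elim: L P => [|x L IH] P Hinf Hmap.
  - destruct (Hinf 0%nat) as [k [_ Hk]]. destruct (Hmap k Hk) as [u [Hu _]]. done.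
  - destruct (classic (forall M, exists k, (M <= k)%nat /\ Rl x k)) as [Hx|Hx].
    + exists x. rewrite in_cons eqxx. auto.
    + have [M0 HM0] : exists M0, forall k, (M0 <= k)%nat -> ~ Rl x k.
      { apply NNPP => Hc. apply Hx => M. apply NNPP => Hc2. apply Hc. exists M.
        intros k Hk Hr. apply Hc2. exists k. auto. }
      destruct (IH (fun k => P k /\ (M0 <= k)%nat)) as [u [Hu Hr]].
      * intros M. destruct (Hinf (Nat.max M M0)) as [k [Hk Pk]]. exists k. split; [lia|split; auto; lia].
      * intros k [Pk Hk]. destruct (Hmap k Pk) as [u [Hu Hr]].
        move: Hu. rewrite in_cons => /orP [/eqP Hux|Hu].
        -- subst u. exfalso. exact (HM0 k Hk Hr).
        -- exists u. auto.
      * exists u. rewrite in_cons Hu orbT. auto.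
Qed.

Section Konig.
Context {V : finType}.

Definition upd (n : nat) (q : Z -> V) (v1 v2 : V) : Z -> V := fun z =>
  if Z.eq_dec z (- Z.of_nat n - 1)%Z then v1 else if Z.eq_dec z (Z.of_nat n + 2)%Z then v2 else q z.

Lemma upd_agree n q v1 v2 : agree n (upd n q v1 v2) q.
Proof.
  intros z Hz. unfold upd. destruct (Z.eq_dec z _); [lia|]. destruct (Z.eq_dec z _); [lia|]. done.
Qed.

Lemma agree_upd n (q a : Z -> V) : agree n a q ->
  agree n.+1 a (upd n q (a (- Z.of_nat n - 1)%Z) (a (Z.of_nat n + 2)%Z)).
Proof.
  intros H z Hz. unfold upd. destruct (Z.eq_dec z _) as [->|]; [done|].
  destruct (Z.eq_dec z _) as [->|]; [done|]. apply H. lia.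
Qed.

Lemma agree_sym n (a b : Z -> V) : agree n a b -> agree n b a.
Proof. intros H z Hz. symmetry. auto. Qed.

Lemma agree_trans n (a b c : Z -> V) : agree n a b -> agree n b c -> agree n a c.
Proof. intros H1 H2 z Hz. rewrite H1 //. auto. Qed.

Lemma agree_mono n m (a b : Z -> V) : (n <= m)%nat -> agree m a b -> agree n a b.
Proof. intros Hnm H z Hz. apply H. lia. Qed.

Lemma limQ (Q : nat -> Z -> V) : (forall n, agree n (Q n.+1) (Q n)) ->
  forall n, agree n (fun z => Q (Z.abs_nat z) z) (Q n).
Proof.
  intros HQ.
  have Hst : forall n k, agree n (Q (n + k)%nat) (Q n).
  { intros n. elim => [|k IH]. rewrite addn0. intros z _. done.
    apply agree_trans with (Q (n + k)%nat); auto.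
    have := HQ (n + k)%nat. rewrite addnS. apply agree_mono. lia. }
  intros n z Hz. simpl.
  destruct (le_lt_dec n (Z.abs_nat z)) as [Hle|Hlt].
  - have := Hst n (Z.abs_nat z - n)%nat z Hz. have -> : (n + (Z.abs_nat z - n) = Z.abs_nat z)%nat by lia. done.
  - have := Hst (Z.abs_nat z) (n - Z.abs_nat z)%nat z ltac:(lia).
    have -> : (Z.abs_nat z + (n - Z.abs_nat z) = n)%nat by lia. intros H. symmetry. done.
Qed.


Lemma refine_inf n (q : Z -> V) (g : nat -> Z -> V) (P : nat -> Prop) :
  (forall M, exists k, (M <= k)%nat /\ P k) -> (forall k, P k -> agree n (g k) q) ->
  exists v1 v2, forall M, exists k, (M <= k)%nat /\ P k /\ agree n.+1 (g k) (upd n q v1 v2).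
Proof.
  intros Hinf Hag.
  destruct (inf_pigeon P (fun v1 k => P k /\ g k (- Z.of_nat n - 1)%Z = v1) (enum V) Hinf)
    as [v1 [_ H1]].
  { intros k Pk. exists (g k (- Z.of_nat n - 1)%Z). rewrite mem_enum. auto. }
  destruct (inf_pigeon (fun k => P k /\ g k (- Z.of_nat n - 1)%Z = v1)
     (fun v2 k => (P k /\ g k (- Z.of_nat n - 1)%Z = v1) /\ g k (Z.of_nat n + 2)%Z = v2) (enum V) H1)
    as [v2 [_ H2]].
  { intros k Pk. exists (g k (Z.of_nat n + 2)%Z). rewrite mem_enum. auto. }
  exists v1, v2. intros M. destruct (H2 M) as [k [Hk [[Pk E1] E2]]].
  exists k. split; auto. split; auto. rewrite -E1 -E2. apply agree_upd. auto.
Qed.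

Lemma base_inf (g : nat -> Z -> V) :
  exists q0, forall M, exists k, (M <= k)%nat /\ agree 0 (g k) q0.
Proof.
  destruct (inf_pigeon (fun _ => True) (fun v0 k => g k 0%Z = v0) (enum V)) as [v0 [_ H1]].
  { intros M. exists M. auto. }
  { intros k _. exists (g k 0%Z). rewrite mem_enum. auto. }
  destruct (inf_pigeon (fun k => g k 0%Z = v0) (fun v1 k => g k 0%Z = v0 /\ g k 1%Z = v1) (enum V) H1)
    as [v1 [_ H2]].
  { intros k Pk. exists (g k 1%Z). rewrite mem_enum. auto. }
  exists (fun z => if Z.eq_dec z 0 then v0 else v1).
  intros M. destruct (H2 M) as [k [Hk [E0 E1]]]. exists k. split; auto.
  intros z Hz. have : z = 0%Z \/ z = 1%Z by simpl in Hz; lia.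
  case=> ->; auto.
Qed.

End Konig.

Lemma d_nonneg {V : finType} {h : R} (hpos : 0 < h) (a : Z -> V) t b t' :
  0 <= d h (mk h a t) (mk h b t').
Proof.
  have := d_ge_term hpos a t b t' 0. have := dterm_bounds h hpos a t b t' 0. simpl. lra.
Qed.

Lemma half_pow_small eps : 0 < eps -> exists N, forall n, (N <= n)%nat -> (/ 2) ^ n < eps.
Proof.
  intros He. destruct (pow_lt_1_zero (/ 2) ltac:(rewrite Rabs_pos_eq; lra) eps He) as [N HN].
  exists N. intros n Hn. have := HN n ltac:(lia). rewrite Rabs_pos_eq //. apply pow_le; lra.
Qed.

Section Exist.
Context {V : finType} (E : rel V) (h : R).
Hypothesis hpos : 0 < h.

Lemma lim_exists sg (a : Z -> V) t : (sg = 1 \/ sg = -1)%Z -> InOmega E a -> 0 <= t <= h ->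
  exists y (tk : nat -> R), InDelta E h y /\ cv_infty (fun k => IZR sg * tk k) /\
    Un_cv (fun k => d h (psi (tk k) (mk h a t)) y) 0.
Proof.
  intros Hsg Ha Ht.
  set g := fun k : nat => shiftZ a (sg * Z.of_nat k)%Z.
  set good := fun n q => forall M, exists k, (M <= k)%nat /\ agree n (g k) q.
  destruct (base_inf g) as [q0 Hq0].
  destruct (dep_choice good (fun n q q' => agree n q' q) q0 Hq0) as [Q [_ HQ]].
  { intros n q Hq. destruct (refine_inf n q g (fun k => agree n (g k) q) Hq) as [v1 [v2 H]]; auto.
    exists (upd n q v1 v2). split; [|apply upd_agree].
    intros M. destruct (H M) as [k [Hk [_ Hk2]]]. exists k. auto. }
  set astar := fun z => Q (Z.abs_nat z) z.
  have Hlim : forall n, agree n astar (Q n) by apply limQ; intros n; apply HQ.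
  set kk := fun n => epsilon (inhabits 0%nat) (fun k => (n <= k)%nat /\ agree n (g k) (Q n)).
  have Hkk : forall n, (n <= kk n)%nat /\ agree n (g (kk n)) (Q n).
  { intros n. apply (epsilon_spec (inhabits 0%nat) (fun k => (n <= k)%nat /\ agree n (g k) (Q n))).
    exact (proj1 (HQ n) n). }
  have Hom : InOmega E astar.
  { intros z. set n := Z.abs_nat z. destruct (Hkk n) as [_ Hg].
    rewrite (Hlim n z ltac:(lia)) (Hlim n (z + 1)%Z ltac:(lia)).
    rewrite -(Hg z ltac:(lia)) -(Hg (z + 1)%Z ltac:(lia)). unfold g, shiftZ.
    have -> : (z + 1 + sg * Z.of_nat (kk n) = (z + sg * Z.of_nat (kk n)) + 1)%Z by lia.
    apply Ha. }
  exists (mk h astar t), (fun n => IZR (sg * Z.of_nat (kk n)) * h). split; [|split].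
  - apply InDelta_mk; auto.
  - intros M. destruct (INR_unbounded (M / h)) as [N HN]. exists N. intros n Hn.
    have -> : IZR sg * (IZR (sg * Z.of_nat (kk n)) * h) = INR (kk n) * h.
    { rewrite -Rmult_assoc -mult_IZR Z.mul_assoc sg_cases // INR_IZR_INZ. f_equal. f_equal. lia. }
    have H1 : INR N <= INR (kk n) by apply le_INR; have := proj1 (Hkk n); lia.
    have : M / h * h = M by field; lra.
    have : M / h * h < INR N * h by apply Rmult_lt_compat_r; lra.
    nra.
  - intros eps He. destruct (half_pow_small (eps / 4) ltac:(lra)) as [N HN].
    exists N. intros n Hn. rewrite psi_mk mk_shift //. unfold R_dist. rewrite Rminus_0_r.
    have Hd := dist_close hpos (shiftZ a (sg * Z.of_nat (kk n))) astar t t n 0 Ht Ht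
      (agree_trans _ _ _ _ (proj2 (Hkk n)) (agree_sym _ _ _ (Hlim n))) ltac:(rewrite Rminus_diag Rabs_R0; lra).
    have := d_nonneg hpos (shiftZ a (sg * Z.of_nat (kk n))) t astar t.
    have := HN n ltac:(lia). intros. rewrite Rabs_pos_eq //.
    have : 0 / h = 0 by field; lra. intros. lra.
Qed.

End Exist.

Section FSdef.
Context {X : Type} {I : Type} (U : I -> X -> Prop).

Definition FS (S : X -> Prop) := exists l : list I, forall f, S f -> exists i, List.In i l /\ U i f.

Lemma FS_mono (S S' : X -> Prop) : (forall f, S f -> S' f) -> FS S' -> FS S.
Proof. intros H [l Hl]. exists l. intros f Hf. apply Hl. auto. Qed.

Lemma FS_union {T : eqType} (L : seq T) (S : T -> X -> Prop) :
  (forall u, u \in L -> FS (S u)) -> FS (fun f => exists u, u \in L /\ S u f).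
Proof.
  elim: L => [|x L IH] H.
  - exists nil. intros f [u [Hu _]]. done.
  - destruct (H x) as [l1 H1]. rewrite in_cons eqxx. done.
    destruct IH as [l2 H2]. intros u Hu. apply H. rewrite in_cons Hu orbT. done.
    exists (l1 ++ l2). intros f [u [Hu Hf]]. move: Hu. rewrite in_cons => /orP [/eqP Hux|Hu].
    + subst u. destruct (H1 f Hf) as [i [Hi Ui]]. exists i. split; auto. apply List.in_or_app. auto.
    + destruct (H2 f) as [i [Hi Ui]]; [exists u; auto|]. exists i. split; auto. apply List.in_or_app. auto.
Qed.

Lemma FS_union_bad {T : eqType} (L : seq T) (S : T -> X -> Prop) :
  ~ FS (fun f => exists u, u \in L /\ S u f) -> exists u, u \in L /\ ~ FS (S u).
Proof.
  intros H. apply NNPP => Hn. apply H. apply FS_union. intros u Hu. apply NNPP => Hb.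
  apply Hn. exists u. auto.
Qed.

End FSdef.

Lemma INR_dbl j : INR (j + j)%nat = 2 * INR j.
Proof. change (j + j)%nat with (Nat.add j j). rewrite plus_INR. lra. Qed.

Lemma INR_dbl1 j : INR (j + j).+1 = 2 * INR j + 1.
Proof. rewrite S_INR INR_dbl. lra. Qed.

Section Compact.
Context {V : finType} (E : rel V) (h : R).
Hypothesis hpos : 0 < h.
Variable C : {set V}.

Definition cls_of (n : nat) (q : Z -> V) (j : nat) (f : R -> V) : Prop :=
  exists a th, f = mk h a th /\ InOmega E a /\ (forall z, a z \in C) /\ 0 <= th < h /\
    agree n a q /\ INR j * h * (/ 2) ^ n <= th <= (INR j + 1) * h * (/ 2) ^ n.

Lemma liftC_mk f : liftC E h C f -> exists a th, f = mk h a th /\ InOmega E a /\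
  (forall z, a z \in C) /\ 0 <= th < h.
Proof.
  intros [Hf HC]. destruct (InDelta_inv E h hpos f Hf) as [a [th [Ha [Hth ->]]]].
  exists a, th. split; auto. split; auto. split; auto.
  intros z. have := HC (IZR z * h - th). rewrite (mk_val h hpos a th _ z) //. lra.
Qed.

Lemma cls_refine n q j f : cls_of n q j f -> exists v1, v1 \in enum V /\ exists v2, v2 \in enum V /\
  exists b, b \in [:: 0%nat; 1%nat] /\ cls_of n.+1 (upd n q v1 v2) ((j + j) + b)%nat f.
Proof.
  intros [a [th [-> [Ha [HaC [Hth [Hag Hj]]]]]]].
  exists (a (- Z.of_nat n - 1)%Z). rewrite mem_enum. split; auto.
  exists (a (Z.of_nat n + 2)%Z). rewrite mem_enum. split; auto.
  have Hp : 0 < (/ 2) ^ n by apply pow_lt; lra.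
  have Hs : (/ 2) ^ n.+1 = / 2 * (/ 2) ^ n by reflexivity.
  destruct (Rle_dec th ((2 * INR j + 1) * h * (/ 2) ^ n.+1)) as [Hle|Hle].
  - exists 0%nat. split; [done|]. exists a, th. do 4 (split; auto). split. apply agree_upd; auto.
    rewrite addn0 INR_dbl. rewrite Hs in Hle *. lra.
  - exists 1%nat. split; [done|]. exists a, th. do 4 (split; auto). split. apply agree_upd; auto.
    rewrite addn1 INR_dbl1. rewrite Hs in Hle *. nra.
Qed.

Lemma compact_lift : compact_in_Delta E h (liftC E h C).
Proof.
  split; [intros f [Hf _]; auto|].
  intros I U Hopen Hcov. apply NNPP => HnK. fold (FS U (liftC E h C)) in HnK.
  have Hbase : exists q0, ~ FS U (cls_of 0 q0 0).
  { apply NNPP => Hn. apply HnK.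
    apply (FS_mono U _ (fun f => exists v0, v0 \in enum V /\ (fun v0 f => exists v1, v1 \in enum V /\
       cls_of 0 (fun z => if Z.eq_dec z 0 then v0 else v1) 0 f) v0 f)).
    - intros f Hf. destruct (liftC_mk _ Hf) as [a [th [-> [Ha [HaC Hth]]]]].
      exists (a 0%Z). rewrite mem_enum. split; auto. exists (a 1%Z). rewrite mem_enum. split; auto.
      exists a, th. do 4 (split; auto). split.
      + intros z Hz. have : z = 0%Z \/ z = 1%Z by simpl in Hz; lia. case=> ->; done.
      + simpl. lra.
    - apply FS_union => v0 _. apply FS_union => v1 _. apply NNPP => Hb. apply Hn. eexists; exact Hb. }
  destruct Hbase as [q0 Hq0].
  destruct (dep_choice (fun n (s : (Z -> V) * nat) => ~ FS U (cls_of n s.1 s.2))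
     (fun n s s' => agree n s'.1 s.1 /\ (s'.2 = s.2 + s.2 \/ s'.2 = (s.2 + s.2).+1)%nat)
     (q0, 0%nat) Hq0) as [QJ [HQJ0 HQJ]].
  { intros n [q j] Hb. simpl in Hb.
    have Hb2 : ~ FS U (fun f => exists v1, v1 \in enum V /\ (fun v1 f => exists v2, v2 \in enum V /\
        (fun v2 f => exists b, b \in [:: 0%nat; 1%nat] /\ cls_of n.+1 (upd n q v1 v2) ((j + j) + b)%nat f) v2 f) v1 f).
    { intros Hc. apply Hb. apply (FS_mono U _ _ (@cls_refine n q j)). exact Hc. }
    destruct (@FS_union_bad _ _ U _ (enum V) (fun v1 f => exists v2, v2 \in enum V /\
        (exists b, b \in [:: 0%nat; 1%nat] /\ cls_of n.+1 (upd n q v1 v2) ((j + j) + b)%nat f)) Hb2)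
      as [v1 [_ Hb3]].
    destruct (@FS_union_bad _ _ U _ (enum V) (fun v2 f =>
        (exists b, b \in [:: 0%nat; 1%nat] /\ cls_of n.+1 (upd n q v1 v2) ((j + j) + b)%nat f)) Hb3)
      as [v2 [_ Hb4]].
    destruct (@FS_union_bad _ _ U _ [:: 0%nat; 1%nat] (fun b f =>
        cls_of n.+1 (upd n q v1 v2) ((j + j) + b)%nat f) Hb4) as [b [Hbin Hb5]].
    exists (upd n q v1 v2, ((j + j) + b)%nat). simpl. split; auto. split; [apply upd_agree|].
    move: Hbin. rewrite !in_cons in_nil orbF => /orP [/eqP ->|/eqP ->]; [left|right]; lia. }
  set Q := fun n => (QJ n).1. set J := fun n => (QJ n).2.
  have Hbad : forall n, ~ FS U (cls_of n (Q n) (J n)) by intros n; apply HQJ.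
  have Hne : forall n, exists f, cls_of n (Q n) (J n) f.
  { intros n. apply NNPP => Hn. apply (Hbad n). exists nil. intros f Hf. exfalso. apply Hn. eauto. }
  set astar := fun z => Q (Z.abs_nat z) z.
  have Hlim : forall n, agree n astar (Q n) by apply limQ; intros n; apply HQJ.
  set lo := fun n => INR (J n) * h * (/ 2) ^ n.
  set hi := fun n => (INR (J n) + 1) * h * (/ 2) ^ n.
  have Hstep : forall n, lo n <= lo n.+1 /\ hi n.+1 <= hi n.
  { intros n. have Hp : 0 < (/ 2) ^ n by apply pow_lt; lra.
    have Hs : (/ 2) ^ n.+1 = / 2 * (/ 2) ^ n by reflexivity.
    unfold lo, hi, J. destruct (HQJ n) as [_ [_ [E1|E1]]]; rewrite E1 ?INR_dbl ?INR_dbl1 Hs; nra. }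
  have Hlohi : forall n, lo n <= hi n.
  { intros n. unfold lo, hi. have : 0 < (/ 2) ^ n by apply pow_lt; lra. nra. }
  have Hmono : forall n k, lo n <= lo (n + k)%nat /\ hi (n + k)%nat <= hi n.
  { intros n. elim => [|k [IH1 IH2]]. rewrite addn0. lra. rewrite addnS.
    have := Hstep (n + k)%nat. lra. }
  have Hlh : forall n m, lo n <= hi m.
  { intros n m. destruct (le_lt_dec n m) as [H|H].
    - have := Hmono n (m - n)%nat. have -> : (n + (m - n) = m)%nat by lia. have := Hlohi m. lra.
    - have := Hmono m (n - m)%nat. have -> : (m + (n - m) = n)%nat by lia. have := Hlohi n. lra. }
  destruct (completeness (fun x => exists n, x = lo n)) as [ths [Hub Hleast]].
  { exists (hi 0%nat). intros x [n ->]. apply Hlh. }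
  { exists (lo 0%nat). eauto. }
  have Hlo_ths : forall n, lo n <= ths by intros n; apply Hub; eauto.
  have Hths_hi : forall n, ths <= hi n.
  { intros n. apply Hleast. intros x [m ->]. apply Hlh. }
  have HJ0 : J 0%nat = 0%nat by unfold J; rewrite HQJ0.
  have Hth0 : 0 <= ths <= h.
  { have := Hlo_ths 0%nat. have := Hths_hi 0%nat. unfold lo, hi. rewrite HJ0 /=. lra. }
  have Hom : InOmega E astar.
  { intros z. set n := Z.abs_nat z. destruct (Hne n) as [f [a [th [_ [Ha [_ [_ [Hag _]]]]]]]].
    rewrite (Hlim n z ltac:(lia)) (Hlim n (z + 1)%Z ltac:(lia)).
    rewrite -(Hag z ltac:(lia)) -(Hag (z + 1)%Z ltac:(lia)). apply Ha. }
  have HinK : liftC E h C (mk h astar ths).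
  { split. apply InDelta_mk; auto. intros s. unfold mk. set z := fl _.
    set n := Z.abs_nat z. destruct (Hne n) as [f [a [th [_ [_ [HaC [_ [Hag _]]]]]]]].
    rewrite (Hlim n z ltac:(lia)) -(Hag z ltac:(lia)). apply HaC. }
  destruct (Hcov _ HinK) as [i Hi].
  destruct (Hopen i _ Hi) as [_ [eps [Heps Hball]]].
  destruct (half_pow_small (eps / 8) ltac:(lra)) as [n Hn].
  apply (Hbad n). exists (i :: nil). intros g [a [th [-> [Ha [HaC [Hth [Hag Hj]]]]]]].
  exists i. split; [left; auto|]. apply Hball. apply InDelta_mk; auto.
  have Hn' := Hn n (leqnn n).
  have Hd := dist_close hpos astar a ths th n (h * (/ 2) ^ n) Hth0 ltac:(lra)
    (agree_trans _ _ _ _ (Hlim n) (agree_sym _ _ _ Hag)).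
  have Hd2 : Rabs (ths - th) <= h * (/ 2) ^ n.
  { have := Hlo_ths n. have := Hths_hi n. unfold lo, hi, J, Q in *. intros. apply Rabs_le. nra. }
  have : h * (/ 2) ^ n / h = (/ 2) ^ n by field; lra.
  intros Heq. have := Hd Hd2. rewrite Heq. lra.
Qed.

End Compact.

Section Final.
Context {V : finType} (E : rel V) (h : R).
Hypothesis hpos : 0 < h.

Lemma scc_succ (C : {set V}) v : is_scc E C -> v \in C -> exists w, w \in C /\ E v w.
Proof.
  intros [_ [Hs _]] Hv. destruct (Hs v v Hv Hv) as [n [p [Pn [A [B [Ce Cin]]]]]].
  exists (p 1%nat). split. apply Cin. lia. rewrite -A. apply Ce. lia.
Qed.

Lemma scc_pred (C : {set V}) v : is_scc E C -> v \in C -> exists w, w \in C /\ E w v.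
Proof.
  intros [_ [Hs _]] Hv. destruct (Hs v v Hv Hv) as [n [p [Pn [A [B [Ce Cin]]]]]].
  exists (p n.-1). split. apply Cin. lia. have := Ce n.-1 ltac:(lia).
  have -> : (n.-1).+1 = n by lia. rewrite B. done.
Qed.

Lemma lift_nonempty (C : {set V}) : is_scc E C -> exists f, liftC E h C f.
Proof.
  intros HC. have [u Hu] : exists u, u \in C by destruct HC as [Hne _]; move/set0Pn: Hne.
  pose succ v := epsilon (inhabits v) (fun w => w \in C /\ E v w).
  pose pred v := epsilon (inhabits v) (fun w => w \in C /\ E w v).
  have Hsucc : forall v, v \in C -> succ v \in C /\ E v (succ v).
  { intros v Hv. apply (epsilon_spec (inhabits v) (fun w => w \in C /\ E v w)). apply scc_succ; auto. }
  have Hpred : forall v, v \in C -> pred v \in C /\ E (pred v) v.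
  { intros v Hv. apply (epsilon_spec (inhabits v) (fun w => w \in C /\ E w v)). apply scc_pred; auto. }
  have Is : forall k, ssrnat.iter k succ u \in C by elim => [|k IH] //=; apply Hsucc.
  have Ip : forall k, ssrnat.iter k pred u \in C by elim => [|k IH] //=; apply Hpred.
  pose a z := if Z_le_dec 0 z then ssrnat.iter (Z.to_nat z) succ u else ssrnat.iter (Z.to_nat (- z)) pred u.
  have HaC : forall z, a z \in C by intros z; unfold a; destruct (Z_le_dec 0 z); [apply Is|apply Ip].
  have Ha : InOmega E a.
  { intros z. unfold a. destruct (Z_le_dec 0 z) as [H1|H1]; destruct (Z_le_dec 0 (z + 1)) as [H2|H2]; cbn [is_left]; try lia.
    - have -> : Z.to_nat (z + 1) = (Z.to_nat z).+1 by lia. simpl. apply Hsucc. apply Is.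
    - have -> : z = (-1)%Z by lia. simpl. apply Hpred. done.
    - have -> : Z.to_nat (- z) = (Z.to_nat (- (z + 1))).+1 by lia. simpl. apply Hpred. apply Ip. }
  exists (mk h a 0). split. apply InDelta_mk; auto. intros t. apply HaC.
Qed.

Lemma lift_invariant (C : {set V}) : Defs.invariant (liftC E h C).
Proof.
  intros t f [[xb [t0 [Hxb ->]]] HC]. split.
  - exists xb, (t0 + t). split; auto. apply functional_extensionality => s. unfold psi. f_equal. ring.
  - intros s. unfold psi. apply HC.
Qed.

Lemma lift_isolated (C : {set V}) : isolated E h (liftC E h C).
Proof.
  exists (fun g => InDelta E h g /\ exists f, liftC E h C f /\ d h f g < 1). split; [|split].
  - intros f [H _]. auto.
  - intros f Hf. exists 1. split; [lra|]. intros g Hg Hd. split; auto. exists f. auto.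
  - intros x Hx HN. split; auto. destruct (InDelta_inv E h hpos x Hx) as [a [t0 [Ha [Ht0 ->]]]].
    intros s. destruct (fl_mul_spec h hpos (s + t0)) as [S1 S2].
    set n := fl ((s + t0) / h) in S1 S2.
    rewrite (mk_val h hpos a t0 s n) //.
    destruct (HN (IZR n * h - t0)) as [_ [f [[Hf HfC] Hd]]].
    rewrite psi_mk in Hd. replace (t0 + (IZR n * h - t0)) with (IZR n * h) in Hd by ring.
    destruct (InDelta_inv E h hpos f Hf) as [b [th [Hb [Hth ->]]]].
    apply NNPP => Hn.
    have L := dterm_lb h hpos b th a (IZR n * h) 0 0 h.
    rewrite Rmult_0_l in L. have {}L := L ltac:(lra) ltac:(lra) ltac:(lra).
    have {}L : (h - 0) / h <= dterm h (mk h b th) (mk h a (IZR n * h)) 0.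
    { apply L. intros x' Hx'. rewrite (mk_val h hpos a (IZR n * h) x' n); [|lra].
      intros Heq. apply Hn. rewrite -Heq. apply HfC. }
    have G := d_ge_term hpos b th a (IZR n * h) 0. simpl in G.
    have : (h - 0) / h = 1 by field; lra. intros. lra.
Qed.

Lemma cv_infty_1 (tk : nat -> R) : cv_infty tk -> cv_infty (fun k => IZR 1 * tk k).
Proof. intros H M. destruct (H M) as [N HN]. exists N. intros n Hn. rewrite Rmult_1_l. auto. Qed.

Lemma cv_infty_m1 (tk : nat -> R) : cv_infty (fun k => - tk k) -> cv_infty (fun k => IZR (-1) * tk k).
Proof. intros H M. destruct (H M) as [N HN]. exists N. intros n Hn. have := HN n Hn. simpl. lra. Qed.

Lemma cv_infty_1' (tk : nat -> R) : cv_infty (fun k => IZR 1 * tk k) -> cv_infty tk.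
Proof. intros H M. destruct (H M) as [N HN]. exists N. intros n Hn. have := HN n Hn. rewrite Rmult_1_l. auto. Qed.

Lemma cv_infty_m1' (tk : nat -> R) : cv_infty (fun k => IZR (-1) * tk k) -> cv_infty (fun k => - tk k).
Proof. intros H M. destruct (H M) as [N HN]. exists N. intros n Hn. have := HN n Hn. simpl. lra. Qed.

Lemma lim_scc sg (a : Z -> V) t y (tk : nat -> R) : (sg = 1 \/ sg = -1)%Z -> InOmega E a ->
  InDelta E h y -> cv_infty (fun k => IZR sg * tk k) ->
  Un_cv (fun k => d h (psi (tk k) (mk h a t)) y) 0 ->
  exists C, is_scc E C /\ liftC E h C y.
Proof.
  intros Hsg Ha Hy Hcv Hd.
  have Hv := lim_values E h hpos _ _ _ _ _ Hsg Hy Hcv Hd.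
  destruct (fut_nonempty a Hsg) as [u Hu].
  exists (cls E u). split.
  - apply cls_scc. exact (proj2 (fut_cls Ha Hsg Hu Hu)).
  - split; auto. intros s. exact (proj1 (fut_cls Ha Hsg Hu (Hv s))).
Qed.

Lemma fut_in_scc sg (a : Z -> V) t (C : {set V}) : (sg = 1 \/ sg = -1)%Z -> InOmega E a -> 0 <= t < h ->
  is_scc E C ->
  (forall y tk, InDelta E h y -> cv_infty (fun k => IZR sg * tk k) ->
     Un_cv (fun k => d h (psi (tk k) (mk h a t)) y) 0 -> liftC E h C y) ->
  forall v, Fut sg a v -> v \in C.
Proof.
  intros Hsg Ha Ht HC Hlim v Hv.
  destruct (lim_exists E h hpos _ _ t Hsg Ha ltac:(lra)) as [y [tk [Hy [Hcv Hd]]]].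
  have [_ HyC] := Hlim y tk Hy Hcv Hd.
  have Hvals := lim_values E h hpos _ _ _ _ _ Hsg Hy Hcv Hd.
  have [Hc1 _] := fut_cls Ha Hsg (Hvals 0) Hv.
  have [Hc2 _] := fut_cls Ha Hsg Hv (Hvals 0).
  apply in_cls in Hc1. apply in_cls in Hc2.
  apply (scc_mem HC (HyC 0)); tauto.
Qed.

End Final.

Theorem mainTheorem6 (V : finType) (E : rel V) (h : R) (hpos : 0 < h) :
  MorseDecomposition E h (fun C : {set V} => is_scc E C) (fun C => liftC E h C).
Proof.
  split; [|split; [|split; [|split; [|split; [|split]]]]].
  - intros C HC. apply (lift_nonempty E h hpos C HC).
  - intros C D HC HD Hn f [Hf1 Hf2]. apply Hn.
    have -> : C = D by apply (scc_eq HC HD (proj2 Hf1 0) (proj2 Hf2 0)).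
    intros g; tauto.
  - intros C _. apply lift_invariant.
  - intros C _. apply (lift_isolated E h hpos).
  - intros C _. apply (compact_lift E h hpos).
  - intros x Hx. destruct (InDelta_inv E h hpos x Hx) as [a [t [Ha [Ht ->]]]]. split.
    + intros y [Hy [tk [Hcv Hd]]].
      exact (lim_scc E h hpos _ _ _ _ _ (or_introl erefl) Ha Hy (cv_infty_1 _ Hcv) Hd).
    + intros y [Hy [tk [Hcv Hd]]].
      exact (lim_scc E h hpos _ _ _ _ _ (or_intror erefl) Ha Hy (cv_infty_m1 _ Hcv) Hd).
  - intros l j x Hl HP Hm Heq.
    have Hrep : forall m, (1 <= m)%nat -> (m <= l)%nat -> exists a t, InOmega E a /\ 0 <= t < h /\
        x m = mk h a t /\ (forall v, Fut 1 a v -> v \in j m) /\ (forall v, Fut (-1) a v -> v \in j (m - 1)%nat).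
    { intros m H1 H2. destruct (Hm m H1 H2) as [Hx [_ [Hal Hom]]].
      destruct (InDelta_inv E h hpos _ Hx) as [a [t [Ha [Ht Hxm]]]].
      exists a, t. do 3 (split; auto). split.
      - apply (fut_in_scc E h hpos _ _ t _ (or_introl erefl) Ha Ht (HP m H2)).
        intros y tk Hy Hcv Hd. apply Hom. split; auto. exists tk. split. apply cv_infty_1'; auto.
        rewrite Hxm. auto.
      - apply (fut_in_scc E h hpos _ _ t _ (or_intror erefl) Ha Ht (HP (m - 1)%nat ltac:(lia))).
        intros y tk Hy Hcv Hd. apply Hal. split; auto. exists tk. split. apply cv_infty_m1'; auto.
        rewrite Hxm. auto. }
    set Rc := fun (C D : {set V}) => forall u v, u \in C -> v \in D -> reach E u v.
    have Hnon : forall m, (m <= l)%nat -> exists w, w \in j m.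
    { intros m Hml. destruct (HP m Hml) as [Hne _]. move/set0Pn: Hne => [w Hw]. eauto. }
    have Hstep : forall m, (1 <= m)%nat -> (m <= l)%nat -> Rc (j (m - 1)%nat) (j m).
    { intros m H1 H2 u v Hu Hv. destruct (Hrep m H1 H2) as [a [t [Ha [_ [_ [HF HP']]]]]].
      destruct (fut_nonempty a (or_intror erefl)) as [p Hp].
      destruct (fut_nonempty a (or_introl erefl)) as [f Hf].
      destruct (fut_before 0 Hp) as [z1 [_ Hz1]]. destruct (fut_after z1 Hf) as [z2 [Hz2 Ez2]].
      apply reach_trans with p.
      - apply (scc_reach (HP (m - 1)%nat ltac:(lia)) Hu). apply HP'; auto.
      - apply reach_trans with f.
        + rewrite -Hz1 -Ez2. apply segment; auto. lia.
        + apply (scc_reach (HP m H2)); auto. }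
    have Hchain : forall m, (1 <= m)%nat -> (m <= l)%nat -> Rc (j 1%nat) (j m).
    { elim => [|m IH] H1 H2; [lia|].
      destruct (leqP m 0) as [Hm0|Hm0].
      - have -> : m.+1 = 1%nat by lia. intros u v Hu Hv. apply (scc_reach (HP 1%nat ltac:(lia))); auto.
      - intros u v Hu Hv. destruct (Hnon m ltac:(lia)) as [w Hw].
        apply reach_trans with w. apply (IH ltac:(lia) ltac:(lia)); auto.
        have := Hstep m.+1 ltac:(lia) H2. have -> : (m.+1 - 1 = m)%nat by lia. intros Hs. apply Hs; auto. }
    have Hj0l : j 0%nat = j l.
    { destruct (lift_nonempty E h hpos _ (HP 0%nat ltac:(lia))) as [f Hf].
      have Hf' := proj1 (Heq f) Hf.
      apply (scc_eq (HP 0%nat ltac:(lia)) (HP l ltac:(lia)) (proj2 Hf 0) (proj2 Hf' 0)). }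
    have H01 : j 1%nat = j 0%nat.
    { destruct (Hnon 1%nat ltac:(lia)) as [w Hw]. destruct (Hnon 0%nat ltac:(lia)) as [u Hu].
      have R1 : reach E u w by have := Hstep 1%nat ltac:(lia) ltac:(lia); simpl; intros Hs; apply Hs.
      have R2 : reach E w u by apply (Hchain l Hl (leqnn l)); auto; rewrite -Hj0l.
      have Hw0 : w \in j 0%nat by apply (scc_mem (HP 0%nat ltac:(lia)) Hu R1 R2).
      apply (scc_eq (HP 1%nat Hl) (HP 0%nat ltac:(lia)) Hw Hw0). }
    destruct (Hrep 1%nat (leqnn 1) Hl) as [a [t [Ha [Ht [Hx1 [HF HP']]]]]].
    destruct (Hm 1%nat (leqnn 1) Hl) as [Hx [Hnot _]].
    apply (Hnot (j 0%nat) (HP 0%nat ltac:(lia))).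
    split; auto. rewrite Hx1. intros s. unfold mk. set z := fl _.
    destruct (fut_nonempty a (or_intror erefl)) as [p Hp].
    destruct (fut_nonempty a (or_introl erefl)) as [f Hf].
    destruct (fut_before z Hp) as [z1 [Hz1 Ez1]]. destruct (fut_after z Hf) as [z2 [Hz2 Ez2]].
    have Hp0 : p \in j 0%nat by have := HP' p Hp.
    have Hf0 : f \in j 0%nat by rewrite -H01; apply HF.
    apply (scc_mem (HP 0%nat ltac:(lia)) Hp0).
    + rewrite -Ez1. apply segment; auto. lia.
    + apply reach_trans with f. rewrite -Ez2. apply segment; auto. lia.
      apply (scc_reach (HP 0%nat ltac:(lia))); auto.
Qed.
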